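(* Let $G=(X,Y;E)$ be a bipartite graph with $n$ vertices and let $M\subseteq E$ be a matching of $G$. Then $M$ is a perfect matching of $G$ that is uniquely restricted if and only if the $BD$-mapping digraph $D(G,M)$ is acyclic and has exactly $n/2$ vertices.
   Context: A matching $M$ is uniquely restricted if the subgraph of $G$ induced by the vertices saturated by $M$ has a unique perfect matching (namely $M$). For each edge of $M$ write it as $(x,x')$ with $x\in X$, $x'\in Y$; $x'$ is called the partner of $x$. The $BD$-mapping digraph $D(G,M)=(V,A)$ has vertex set $V=\{x\in X : (x,x')\in M \text{ for some } x'\}$ and arc set $A=\{\langle x_1,x_2\rangle : x_1,x_2\in V,\ (x_1,x_2')\in E\setminus M\}$, where $x_2'$ is the partner of $x_2$. $|D(G,M)|$ denotes the number of vertices of $D(G,M)$. *)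

(* Defs.v *)
From mathcomp Require Import all_boot.
Set Implicit Arguments. Unset Strict Implicit. Unset Printing Implicit Defensive.

(* A bipartite graph G = (X, Y; E) is given by two finite vertex types X, Y
   (the two colour classes) and an edge set E of pairs (x, y), x in X, y in Y. *)

Section Bip.
Variables (X Y : finType).

Definition is_matching (M : {set X * Y}) : Prop :=
  forall e1 e2, e1 \in M -> e2 \in M ->
    (e1.1 = e2.1 \/ e1.2 = e2.2) -> e1 = e2.

Definition is_matching_of (E M : {set X * Y}) : Prop :=
  M \subset E /\ is_matching M.

Definition satX (M : {set X * Y}) : {set X} := [set x | [exists y, (x, y) \in M]].
Definition satY (M : {set X * Y}) : {set Y} := [set y | [exists x, (x, y) \in M]].

Definition perfect_matching (E M : {set X * Y}) : Prop :=
  is_matching_of E M /\ satX M = [set: X] /\ satY M = [set: Y].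

Definition perfect_matching_induced (E : {set X * Y}) (A : {set X}) (B : {set Y})
    (M' : {set X * Y}) : Prop :=
  is_matching_of E M' /\
  (forall e, e \in M' -> e.1 \in A /\ e.2 \in B) /\
  satX M' = A /\ satY M' = B.

Definition uniquely_restricted (E M : {set X * Y}) : Prop :=
  is_matching_of E M /\
  forall M', perfect_matching_induced E (satX M) (satY M) M' -> M' = M.

Definition BD_vertices (M : {set X * Y}) : {set X} := satX M.

Definition BD_arc (E M : {set X * Y}) : rel X :=
  fun x1 x2 => [&& x1 \in BD_vertices M, x2 \in BD_vertices M &
     [exists y, [&& (x2, y) \in M, (x1, y) \in E & (x1, y) \notin M]]].

(* A digraph given by a relation is acyclic: it has no directed closed walk
   (equivalently, no directed cycle). *)
Definition acyclic_digraph (r : rel X) : Prop :=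
  ~ exists (x : X) (p : seq X), p != [::] /\ path r x p /\ last x p = x.

End Bip.

(* Main.v *)
Require Import Defs.
From mathcomp Require Import all_boot.
From mathcomp Require Import zify.
Set Implicit Arguments. Unset Strict Implicit. Unset Printing Implicit Defensive.

Section H.
Variables (X Y : finType).
Implicit Types (E M : {set X * Y}).

Lemma meq1 M x y1 y2 : is_matching M -> (x,y1) \in M -> (x,y2) \in M -> y1 = y2.
Proof. by move=> hm h1 h2; have [] := hm _ _ h1 h2 (or_introl erefl). Qed.

Lemma meq2 M x1 x2 y : is_matching M -> (x1,y) \in M -> (x2,y) \in M -> x1 = x2.
Proof. by move=> hm h1 h2; have [] := hm _ _ h1 h2 (or_intror erefl). Qed.

Lemma card_satX M : is_matching M -> #|satX M| = #|M|.
Proof.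
move=> hm; have -> : satX M = [set e.1 | e in M].
  apply/setP=> x; rewrite in_set; apply/existsP/imsetP.
    by case=> y h; exists (x,y).
  by case=> [[a b]] h /= ->; exists b.
by apply: card_in_imset => e1 e2 h1 h2 he; apply: hm => //; left.
Qed.

Lemma card_satY M : is_matching M -> #|satY M| = #|M|.
Proof.
move=> hm; have -> : satY M = [set e.2 | e in M].
  apply/setP=> x; rewrite in_set; apply/existsP/imsetP.
    by case=> y h; exists (y,x).
  by case=> [[a b]] h /= ->; exists a.
by apply: card_in_imset => e1 e2 h1 h2 he; apply: hm => //; right.
Qed.

Lemma closed_walk (r : rel X) (D : {set X}) x0 : x0 \in D ->
  (forall x, x \in D -> exists2 x', x' \in D & r x x') -> ~ acyclic_digraph r.
Proof.
move=> x0D hD; pose f x := odflt x [pick x' in D | r x x'].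
have fD x : x \in D -> f x \in D /\ r x (f x).
  move=> xD; rewrite /f; case: pickP => [x' /andP[]//|].
  by case: (hD x xD) => x' h1 h2 /(_ x'); rewrite h1 h2.
have itD i : iter i f x0 \in D by elim: i => //= i IH; case: (fD _ IH).
have pth m z : z \in D -> path r z (traject f (f z) m).
  elim: m z => //= m IH z zD; case: (fD _ zD) => h1 h2.
  by rewrite h2 /=; apply: IH.
pose g (k : 'I_(#|X|.+1)) := iter k f x0.
have : ~~ injectiveb g.
  apply/injectiveP => inj; have := leq_card _ inj; rewrite card_ord; lia.
case/injectivePn => i [j nij eqij] hac.
wlog lt : i j nij eqij / (i < j)%N.
  move=> W; case: (ltngtP i j) => h; first exact: (W i j).
    by apply: (W j i) => //; rewrite eq_sym.
  by move: nij; rewrite -val_eqE /= h eqxx.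
apply: hac; exists (iter i f x0), (traject f (f (iter i f x0)) (j - i)).
split; first by case: (j - i) (subn_gt0 i j) => //; rewrite lt.
split; first exact: pth.
rewrite last_traject -iterD subnK ?(ltnW lt) //.
Qed.

Lemma arc_neq E M x1 x2 : BD_arc E M x1 x2 -> x1 != x2.
Proof.
case/and3P=> _ _ /existsP[y /and3P[h1 _ h2]]; apply/eqP=> e.
by move: h2; rewrite e h1.
Qed.

End H.

Theorem theorem7 (X Y : finType) (E M : {set X * Y}) :
  is_matching_of E M ->
  ((perfect_matching E M /\ uniquely_restricted E M) <->
   (acyclic_digraph (BD_arc E M) /\
    2 * #|BD_vertices M| = #|X| + #|Y|)).
Proof.
move=> [sME hm]; split.
- move=> [[_ [sX sY]] [_ ur]]; split; last first.
    rewrite /BD_vertices; have := card_satX hm; have := card_satY hm.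
    rewrite sX sY !cardsT; lia.
  case=> x1 [p [pn [pp pl]]].
  case: p pn pp pl => // y q _ /= /andP[rxy pyq] lq.
  case: (shortenP pyq) lq => q' pq' uq' _ lq'.
  set c := y :: q'.
  have cyc : cycle (BD_arc E M) c by rewrite /c /= rcons_path pq' lq' rxy.
  have uc : uniq c by [].
  have yc : y \in c by rewrite mem_head.
  clearbody c.
  pose M' := [set e : X * Y | if e.1 \in c then (next c e.1, e.2) \in M else e \in M].
  have partner x : exists y, (x, y) \in M.
    have : x \in satX M by rewrite sX in_setT.
    by rewrite /satX inE => /existsP.
  have arcE x : x \in c -> forall z, (next c x, z) \in M -> (x, z) \in E /\ (x,z) \notin M.
    move=> xc z hz; have := next_cycle cyc xc.
    case/and3P=> _ _ /existsP[w /and3P[h1 h2 h3]].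
    by rewrite (meq1 hm hz h1).
  have pm : perfect_matching_induced E (satX M) (satY M) M'.
    split; [split|split; [|split]].
    + apply/subsetP=> [[a b]]; rewrite inE /=; case: ifP => ac h.
        by case: (arcE a ac b h).
      exact: (subsetP sME).
    + move=> [a1 b1] [a2 b2]; rewrite !inE /=.
      case: ifP => a1c; case: ifP => a2c h1 h2 [/= ea|/= eb].
      * by subst a2; rewrite (meq1 hm h1 h2).
      * subst b2; have := meq2 hm h1 h2 => /(congr1 (prev c)).
        by rewrite !prev_next // => ->.
      * by subst a2; rewrite a1c in a2c.
      * subst b2; have e := meq2 hm h1 h2.
        by move: a2c; rewrite -e mem_next a1c.
      * by subst a2; rewrite a1c in a2c.
      * subst b2; have e := meq2 hm h1 h2.
        by move: a1c; rewrite e mem_next a2c.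
      * by subst; rewrite (meq1 hm h1 h2).
      * by subst; rewrite (meq2 hm h1 h2).
    + by move=> e _; rewrite sX sY !inE.
    + rewrite sX; apply/setP=> a; rewrite !inE; apply/existsP.
      case ac: (a \in c).
        case: (partner (next c a)) => b hb; exists b; by rewrite inE /= ac.
      case: (partner a) => b hb; exists b; by rewrite inE /= ac.
    + rewrite sY; apply/setP=> b; rewrite !inE; apply/existsP.
      have : b \in satY M by rewrite sY in_setT.
      rewrite /satY inE => /existsP[a hab].
      case ac: (a \in c).
        exists (prev c a); rewrite inE /= mem_prev ac next_prev //.
      by exists a; rewrite inE /= ac.
  have eM := ur _ pm.
  case: (partner (next c y)) => z hz.
  case: (arcE y yc z hz) => _ /negP; apply.
  by rewrite -eM inE /= yc.
- move=> [acy hc]; rewrite /BD_vertices in hc.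
  have cX := card_satX hm; have cY := card_satY hm.
  have lX : #|satX M| <= #|X| by apply: max_card.
  have lY : #|satY M| <= #|Y| by apply: max_card.
  have sX : satX M = [set: X].
    by apply/eqP; rewrite eqEcard subsetT cardsT; lia.
  have sY : satY M = [set: Y].
    by apply/eqP; rewrite eqEcard subsetT cardsT; lia.
  split; first by [].
  split; first by [].
  move=> M' [[sM'E hm'] [_ [sX' sY']]].
  have partner x : exists y, (x, y) \in M.
    have : x \in satX M by rewrite sX in_setT.
    by rewrite /satX inE => /existsP.
  have partnerY y : exists x, (x, y) \in M.
    have : y \in satY M by rewrite sY in_setT.
    by rewrite /satY inE => /existsP.
  have partner' x : exists y, (x, y) \in M'.
    have : x \in satX M' by rewrite sX' sX in_setT.
    by rewrite /satX inE => /existsP.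
  apply/eqP; apply: contraT => neq.
  pose D := [set x | [exists y, ((x,y) \in M') && ((x,y) \notin M)]].
  have [x0 x0D] : exists x0, x0 \in D.
    case: (pickP [pred e | (e \in M') != (e \in M)]) => [[a b] /= hab|h].
      case hM': ((a,b) \in M') hab => /= hab.
        by exists a; rewrite inE; apply/existsP; exists b; rewrite hM' hab.
      case: (partner' a) => b' hb'; exists a; rewrite inE; apply/existsP.
      exists b'; rewrite hb' /=; apply/negP => hb'M.
      have eb := meq1 hm hb'M (negbNE hab); subst b'; by rewrite hb' in hM'.
    case/negP: neq; apply/eqP/setP => e; have := h e; rewrite /=.
    by move/negbFE/eqP.
  exfalso; apply: (closed_walk (r := BD_arc E M) x0D _ acy) => x; rewrite inE => /existsP[y /andP[h1 h2]].
  case: (partnerY y) => x2 h3.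
  exists x2.
    rewrite inE; case: (partner' x2) => y2 h4; apply/existsP; exists y2.
    rewrite h4 /=; apply/negP => h5.
    have ey := meq1 hm h3 h5; subst y2.
    have ex := meq2 hm' h1 h4; subst x2; by rewrite h3 in h2.
  rewrite /BD_arc /BD_vertices sX !inE /=; apply/existsP; exists y.
  by rewrite h3 h2 (subsetP sM'E _ h1).
Qed.
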